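(* Let $\lambda\ge1$, let $x^*$ be an optimal solution to $(P_\lambda)$ (assumed feasible), let $y^*$ be an optimal solution to $\max_{y\in\mathbb{R}^{\mathcal{S}}_{\ge0}}g_\lambda(y)$, and let $\mathcal{L}$ be a laminar decomposition of $x^*$. Then for every $L\in\mathcal{L}$, all edges of $\mathrm{supp}(x^* )\cap E^{\mathcal{L}}_L$ have the same $c^{y^*}$-cost.
   Context: Setting: $G=(V,E)$ undirected connected graph, costs $c_e\ge0$, a chain $\mathcal{S}$ of node sets $S_1\subsetneq\dots\subsetneq S_\ell\subsetneq V$, integers $b_S$. $E(S)$ = edges with both ends in $S$, $\delta(S)$ = edges with exactly one end in $S$, $z(F)=\sum_{e\in F}z_e$, $\mathrm{supp}(z)=\{e:z_e>0\}$. $P_{ST}(G)=\{x\in\mathbb{R}^E_{\ge0}: x(E(S))\le|S|-1\ \forall\emptyset\ne S\subsetneq V,\ x(E)=|V|-1\}$. $(P_\lambda)$: minimize $\sum_ec_ex_e$ over $x\in P_{ST}(G)$ with $x(\delta(S))\le\lambda b_S$ for all $S\in\mathcal{S}$. For $y\in\mathbb{R}^{\mathcal{S}}$, $c^y_e=c_e+\sum_{S\in\mathcal{S}:e\in\delta(S)}y_S$ and $g_\lambda(y)=\min_{x\in P_{ST}(G)}\big(\sum_ec^y_ex_e-\lambda\sum_{S}b_Sy_S\big)$. A laminar decomposition of $x\in P_{ST}(G)$ is an inclusion-wise maximal laminar family of nonempty sets $A\subseteq V$ with $x(E(A))=|A|-1$. For $L\in\mathcal{L}$, $E^{\mathcal{L}}_L$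 is the edge set of the graph obtained from $(L,E(L))$ by contracting the maximal members of $\mathcal{L}$ strictly contained in $L$ (i.e., edges of $E(L)$ not contained in any such member). *)

(* Defs.v *)
From HB Require Import structures.
From mathcomp Require Import all_boot all_order all_algebra.
From mathcomp Require classical_sets.
From mathcomp Require Import reals.
Set Implicit Arguments. Unset Strict Implicit. Unset Printing Implicit Defensive.
Import Order.TTheory GRing.Theory Num.Theory.
Local Open Scope ring_scope.

Section Defs.
Variables (R : realType) (V E : finType) (src dst : E -> V).

(* undirected graph: edge e joins src e and dst e (parallel edges allowed) *)
Definition loopless : Prop := forall e, src e != dst e.
Definition adj : rel V := fun a b =>
  [exists e, ((src e == a) && (dst e == b)) || ((dst e == a) && (src e == b))].
Definition connected_graph : Prop := forall a b, connect adj a b.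

Definition Ein (A : {set V}) : {set E} :=
  [set e | (src e \in A) && (dst e \in A)].
Definition delta (A : {set V}) : {set E} :=
  [set e | (src e \in A) != (dst e \in A)].

Definition zsum (z : E -> R) (F : {set E}) : R := \sum_(e in F) z e.

Definition in_PST (x : E -> R) : Prop :=
  (forall e, 0 <= x e) /\
  (forall A : {set V}, A != set0 -> A != setT ->
      zsum x (Ein A) <= (#|A|)%:R - 1) /\
  zsum x setT = (#|V|)%:R - 1.

Definition cost (c x : E -> R) : R := \sum_e c e * x e.

Definition is_chain (l : nat) (S : 'I_l -> {set V}) : Prop :=
  (forall i j : 'I_l, (i < j)%N -> S i \proper S j) /\
  (forall i, S i \proper setT).

Definition feasible_P (l : nat) (S : 'I_l -> {set V}) (b : 'I_l -> int)
    (lam : R) (x : E -> R) : Prop :=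
  in_PST x /\ forall i, zsum x (delta (S i)) <= lam * (b i)%:~R.

Definition optimal_P (c : E -> R) (l : nat) (S : 'I_l -> {set V})
    (b : 'I_l -> int) (lam : R) (x : E -> R) : Prop :=
  feasible_P S b lam x /\
  forall x', feasible_P S b lam x' -> cost c x <= cost c x'.

Definition cy (c : E -> R) (l : nat) (S : 'I_l -> {set V}) (y : 'I_l -> R)
    (e : E) : R :=
  c e + \sum_(i < l | e \in delta (S i)) y i.

(* g_lambda(y) = min over P_ST (taken as inf; the min is attained) *)
Definition g_lam (c : E -> R) (l : nat) (S : 'I_l -> {set V})
    (b : 'I_l -> int) (lam : R) (y : 'I_l -> R) : R :=
  inf (fun r : R => exists x : E -> R, in_PST x /\
        r = cost (cy c S y) x - lam * \sum_(i < l) (b i)%:~R * y i).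

Definition optimal_dual (c : E -> R) (l : nat) (S : 'I_l -> {set V})
    (b : 'I_l -> int) (lam : R) (y : 'I_l -> R) : Prop :=
  (forall i, 0 <= y i) /\
  forall y' : 'I_l -> R, (forall i, 0 <= y' i) ->
    g_lam c S b lam y' <= g_lam c S b lam y.

Definition tight (x : E -> R) (A : {set V}) : bool :=
  (A != set0) && (zsum x (Ein A) == (#|A|)%:R - 1).

Definition laminar (F : {set {set V}}) : bool :=
  [forall A in F, forall B in F,
     [|| A \subset B, B \subset A | [disjoint A & B]]].

Definition valid_family (x : E -> R) (F : {set {set V}}) : bool :=
  laminar F && [forall A in F, tight x A].

Definition laminar_decomposition (x : E -> R) (L : {set {set V}}) : Prop :=
  valid_family x L /\
  forall F, valid_family x F -> L \subset F -> F = L.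

Definition child (L : {set {set V}}) (A M : {set V}) : bool :=
  [&& M \in L, M \proper A &
      ~~ [exists N in L, (M \proper N) && (N \proper A)]].

Definition EL (L : {set {set V}}) (A : {set V}) : {set E} :=
  [set e in Ein A | [forall M, child L A M ==> (e \notin Ein M)]].

End Defs.

(* Main.v *)
Require Import Defs.
From HB Require Import structures.
From mathcomp Require Import all_boot all_order all_algebra.
From mathcomp Require classical_sets.
From mathcomp Require Import reals.
From mathcomp Require Import ring lra.
Import Order.TTheory GRing.Theory Num.Theory.
Local Open Scope ring_scope.
Set Implicit Arguments. Unset Strict Implicit. Unset Printing Implicit Defensive.

Section Farkas.
Variable R : realFieldType.

Lemma ex_max (I : finType) (P : pred I) (f : I -> R) :
  (exists i, P i) -> exists i, P i /\ forall j, P j -> f j <= f i.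
Proof.
case=> i0 Pi0; case: (arg_maxP f Pi0) => i Pi Hi.
by exists i; split.
Qed.

Lemma ex_min (I : finType) (P : pred I) (f : I -> R) :
  (exists i, P i) -> exists i, P i /\ forall j, P j -> f i <= f j.
Proof.
case=> i0 Pi0; case: (arg_minP f Pi0) => i Pi Hi.
by exists i; split.
Qed.

Lemma interp (I : finType) (P Q : pred I) (lo up : I -> R) :
  (forall i j, P i -> Q j -> lo i <= up j) ->
  exists t, (forall i, P i -> lo i <= t) /\ (forall j, Q j -> t <= up j).
Proof.
move=> H.
case: (boolP [exists i, P i]) => [/existsP exP|nP].
  case: (ex_max lo exP) => i [Pi Hi]; exists (lo i); split => // j Qj.
  exact: H.
case: (boolP [exists j, Q j]) => [/existsP exQ|nQ].
  case: (ex_min up exQ) => j [Qj Hj]; exists (up j); split => // i Pi.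
  exact: H.
exists 0; split => [i Pi|j Qj]; [move: nP|move: nQ] => /existsP []; eexists; eauto.
Qed.

Variable T : finType.
Definition dot (a x : T -> R) := \sum_k a k * x k.

Lemma sum_if1 (I : finType) (i : I) (c : R) (F : I -> R) :
  \sum_m (if m == i then c else 0) * F m = c * F i.
Proof.
rewrite (bigD1 i) //= eqxx big1 ?addr0 // => j /negbTE ->; by rewrite mul0r.
Qed.

Lemma sum_exch (I J : finType) (w : J -> R) (g : J -> I -> R) (F : I -> R) :
  \sum_i (\sum_p w p * g p i) * F i = \sum_p w p * (\sum_i g p i * F i).
Proof.
under eq_bigr do rewrite mulr_suml.
rewrite exchange_big /=; apply: eq_bigr => p _; rewrite mulr_sumr.
by apply: eq_bigr => i _; rewrite mulrA.
Qed.

Lemma dot_lin (I : finType) (g : I -> R) (a : I -> T -> R) x :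
  dot (fun k => \sum_m g m * a m k) x = \sum_m g m * dot (a m) x.
Proof.
rewrite /dot; under eq_bigr do rewrite mulr_suml.
rewrite exchange_big /=; apply: eq_bigr => m _; rewrite mulr_sumr.
by apply: eq_bigr => k _; rewrite mulrA.
Qed.

Lemma dot_split (a x : T -> R) v :
  dot a x = a v * x v + \sum_(k | k != v) a k * x k.
Proof. by rewrite /dot (bigD1 v). Qed.

Lemma FM m : forall (D : {set T}), #|D| = m ->
  forall (I : finType) (a : I -> T -> R) (bt : I -> R),
  (forall i k, k \notin D -> a i k = 0) ->
  ~ (exists x, forall i, dot (a i) x <= bt i) ->
  exists w : I -> R, (forall i, 0 <= w i) /\
    (forall k, \sum_i w i * a i k = 0) /\ \sum_i w i * bt i < 0.
Proof.
elim: m => [|m IH] D cD I a bt supp nf.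
  have D0 : D = set0 by apply/eqP; rewrite -cards_eq0 cD.
  case: (boolP [forall i, 0 <= bt i]) => [/forallP allp|].
    case: nf; exists (fun _ => 0) => i.
    rewrite /dot big1 ?allp // => k _; by rewrite mulr0.
  move=> /forallPn [i0]; rewrite -ltNge => lt0.
  exists (fun j => if j == i0 then 1 else 0); split; first by move=> j; case: ifP.
  split; first by move=> k; rewrite sum_if1 mul1r supp // D0 inE.
  by rewrite sum_if1 mul1r.
have : (0 < #|D|)%N by rewrite cD.
case/card_gt0P => v vD.
set D' := D :\ v.
have cD' : #|D'| = m by rewrite /D' (cardsD1 v D) vD in cD; case: cD.
pose gam (p : I * I) (mm : I) : R :=
  let: (i, j) := p in
  if (0 < a i v) && (a j v < 0) then
    (if mm == i then - a j v else 0) + (if mm == j then a i v else 0)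
  else if a i v == 0 then (if mm == i then 1 else 0) else 0.
have gam_ge0 p mm : 0 <= gam p mm.
  case: p => i j /=; case: ifP => [/andP[pi nj]|_].
    by apply: addr_ge0; case: ifP => //= _; [rewrite oppr_ge0 ltW|rewrite ltW].
  by case: ifP => //; case: ifP.
have gam_sum p (F : I -> R) : \sum_mm gam p mm * F mm =
   let: (i, j) := p in
   if (0 < a i v) && (a j v < 0) then - a j v * F i + a i v * F j
   else if a i v == 0 then F i else 0.
  case: p => i j /=; case: ifP => _.
    under eq_bigr do rewrite mulrDl.
    by rewrite big_split /= !sum_if1.
  case: ifP => _; first by rewrite sum_if1 mul1r.
  by rewrite big1 // => mm _; rewrite mul0r.
pose a' p k := \sum_mm gam p mm * a mm k.
pose bt' p := \sum_mm gam p mm * bt mm.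
have a'v p : a' p v = 0.
  rewrite /a' gam_sum; case: p => i j; case: ifP => _; first by rewrite mulNr mulrC addNr.
  by case: ifP => // /eqP.
have supp' p k : k \notin D' -> a' p k = 0.
  rewrite /D' !inE negb_and negbK; case/orP => [/eqP -> //|kD].
  by rewrite /a' big1 // => mm _; rewrite supp // mulr0.
have [w' [w'0 [w'a w'b]]] : exists w' : I * I -> R, (forall p, 0 <= w' p) /\
    (forall k, \sum_p w' p * a' p k = 0) /\ \sum_p w' p * bt' p < 0.
  apply: (IH D' cD' _ a' bt' supp') => -[x Hx].
  apply: nf.
  pose x0 k := if k == v then 0 else x k.
  pose r mm := bt mm - dot (a mm) x0.
  have H p : 0 <= \sum_mm gam p mm * r mm.
    have := Hx p.
    have -> : dot (a' p) x = dot (a' p) x0.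
      apply: eq_bigr => k _; rewrite /x0; case: eqP => [->|//].
      by rewrite a'v !mul0r.
    rewrite /a' dot_lin /bt' -subr_ge0 -sumrB.
    by under eq_bigr do rewrite -mulrBr.
  have hint : forall i j, a i v < 0 -> 0 < a j v -> r i / a i v <= r j / a j v.
    move=> i j /= ni pj.
    have := H (j, i); rewrite gam_sum pj ni /= => h.
    have e : r j / a j v - r i / a i v = (- a i v * r j + a j v * r i) / (a j v * - a i v).
      by field; rewrite ?(lt0r_neq0 pj) ?(ltr0_neq0 ni).
    rewrite -subr_ge0 e divr_ge0 // mulr_ge0 // ?ltW // ?oppr_ge0 ?ltW // oppr_gt0; first by [].
  have [t [Ht1 Ht2]] := @interp I (fun mm => a mm v < 0) (fun mm => 0 < a mm v)
     (fun mm => r mm / a mm v) (fun mm => r mm / a mm v) hint.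
  exists (fun k => if k == v then t else x k) => mm.
  have -> : dot (a mm) (fun k => if k == v then t else x k) = a mm v * t + dot (a mm) x0.
    rewrite !(dot_split _ _ v) /x0 eqxx mulr0 add0r; congr (_ + _).
    by apply: eq_bigr => k /negbTE ->.
  suff : a mm v * t <= r mm by rewrite /r lerBrDr.
  case: (ltrgt0P (a mm v)) => ha.
  - have := Ht2 mm ha; rewrite ler_pdivlMr // mulrC //.
  - have := Ht1 mm ha; rewrite ler_ndivrMr // mulrC //.
  - by have := H (mm, mm); rewrite gam_sum ha ltxx /= eqxx mul0r.
exists (fun i => \sum_p w' p * gam p i); split.
  by move=> i; apply: sumr_ge0 => p _; apply: mulr_ge0.
split; last by rewrite sum_exch.
move=> k; rewrite sum_exch; exact: w'a.
Qed.

Lemma lagr (J K : finType) (aJ : J -> T -> R) (bJ : J -> R)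
  (aK : K -> T -> R) (bK : K -> R) (o : J) (xs : T -> R) (eps : R) :
  0 < eps -> bJ o = dot (aJ o) xs - eps ->
  (forall j, j != o -> dot (aJ j) xs <= bJ j) ->
  (forall k, dot (aK k) xs <= bK k) ->
  ~ (exists x, (forall j, dot (aJ j) x <= bJ j) /\ (forall k, dot (aK k) x <= bK k)) ->
  exists y : K -> R, (forall k, 0 <= y k) /\ forall x,
    (forall j, j != o -> dot (aJ j) x <= bJ j) ->
    dot (aJ o) xs - eps < dot (aJ o) x + \sum_k y k * (dot (aK k) x - bK k).
Proof.
move=> eps0 bo Hxs1 Hxs2 nf.
pose a (i : J + K) := match i with inl j => aJ j | inr k => aK k end.
pose b (i : J + K) := match i with inl j => bJ j | inr k => bK k end.
have sp : forall i k, k \notin [set: T] -> a i k = 0 by move=> i k; rewrite inE.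
have nf' : ~ (exists x, forall i, dot (a i) x <= b i).
  case=> x Hx; apply: nf; exists x; split=> [j|k]; [exact: (Hx (inl j))|exact: (Hx (inr k))].
have [w [w0 [wa wb]]] := @FM _ setT erefl (J + K)%type a b sp nf'.
have key x : 0 < \sum_i w i * (dot (a i) x - b i).
  under eq_bigr do rewrite mulrBr.
  rewrite sumrB -sum_exch big1 ?add0r ?oppr_gt0 // => k _.
  by rewrite wa mul0r.
have split x : \sum_i w i * (dot (a i) x - b i) =
   w (inl o) * (dot (aJ o) x - bJ o) +
   \sum_(j | j != o) w (inl j) * (dot (aJ j) x - bJ j) +
   \sum_k w (inr k) * (dot (aK k) x - bK k).
  by rewrite big_sumType /= (bigD1 o).
have negJ x : (forall j, j != o -> dot (aJ j) x <= bJ j) ->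
   \sum_(j | j != o) w (inl j) * (dot (aJ j) x - bJ j) <= 0.
  move=> h; apply: sumr_le0 => j jo; apply: mulr_ge0_le0 => //.
  by rewrite subr_le0 h.
have wo : 0 < w (inl o).
  have := key xs; rewrite split.
  have n1 := negJ xs Hxs1.
  have n2 : \sum_k w (inr k) * (dot (aK k) xs - bK k) <= 0.
    by apply: sumr_le0 => k _; apply: mulr_ge0_le0 => //; rewrite subr_le0.
  have e1 : dot (aJ o) xs - bJ o = eps by rewrite bo; ring.
  rewrite e1 => h.
  have : 0 < w (inl o) * eps by lra.
  by rewrite pmulr_lgt0.
exists (fun k => w (inr k) / w (inl o)); split.
  by move=> k; rewrite divr_ge0 // ltW.
move=> x hx; have := key x; rewrite split.
have n1 := negJ x hx.
move=> h.
have h2 : 0 < w (inl o) * (dot (aJ o) x - bJ o) + \sum_k w (inr k) * (dot (aK k) x - bK k) by lra.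
have h3 : 0 < (dot (aJ o) x - bJ o) + \sum_k w (inr k) / w (inl o) * (dot (aK k) x - bK k).
  have -> : \sum_k w (inr k) / w (inl o) * (dot (aK k) x - bK k) =
     (\sum_k w (inr k) * (dot (aK k) x - bK k)) / w (inl o).
    rewrite mulr_suml; apply: eq_bigr => k _; by rewrite mulrAC.
  rewrite -(pmulr_rgt0 _ wo) mulrDr mulrCA divff ?mulr1 //; exact: lt0r_neq0.
rewrite bo in h3; lra.
Qed.
End Farkas.


Section Cross.
Variable V : finType.
Implicit Types A B T N M : {set V}.
Definition crosses A B : bool :=
  [&& ~~ (A \subset B), ~~ (B \subset A) & ~~ [disjoint A & B]].

Lemma notdisjP A B : ~~ [disjoint A & B] -> exists v, (v \in A) && (v \in B).
Proof.
rewrite -setI_eq0 => /set0Pn [v]; rewrite inE => h; by exists v.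
Qed.

Lemma crossI T N M : crosses T N ->
  [|| M \subset N, N \subset M | [disjoint N & M]] ->
  crosses (T :&: N) M -> crosses T M.
Proof.
move=> _ lam /and3P [h1 h2 h3].
case/or3P: lam => [sMN|sNM|dNM].
- apply/and3P; split.
  + by apply: contra h1 => s; rewrite subIset // s.
  + apply: contra h2 => s; by rewrite subsetI s sMN.
  + apply: contra h3 => d; exact: (disjointWl (subsetIl T N) d).
- by case/negP: h1; rewrite subIset // sNM orbT.
- case/negP: h3; rewrite disjoint_sym in dNM; rewrite disjoint_sym.
  exact: (disjointWr (subsetIr T N) dNM).
Qed.

Lemma crossU T N M : crosses T N ->
  [|| M \subset N, N \subset M | [disjoint N & M]] ->
  crosses (T :|: N) M -> crosses T M.
Proof.
move=> /and3P [_ _ tn] lam /and3P [h1 h2 h3].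
have [v /andP [vT vN]] := notdisjP tn.
case/or3P: lam => [sMN|sNM|dNM].
- by case/negP: h2; rewrite (subset_trans sMN) // subsetUr.
- apply/and3P; split.
  + apply: contra h1 => s; by rewrite subUset s sNM.
  + apply: contra h2 => s; by rewrite (subset_trans s) // subsetUl.
  + apply/negP => d; have := disjointFr d vT; by rewrite (subsetP sNM).
- apply/and3P; split.
  + apply/negP => s; have := disjointFr dNM vN; by rewrite (subsetP s).
  + apply: contra h2 => s; by rewrite (subset_trans s) // subsetUl.
  + apply: contra h3 => d; rewrite -setI_eq0 setIUl (disjoint_setI0 d).
    by rewrite (disjoint_setI0 dNM) setU0.
Qed.

Lemma ncrossI T N : ~~ crosses (T :&: N) N.
Proof. by rewrite /crosses subsetIr. Qed.
Lemma ncrossU T N : ~~ crosses (T :|: N) N.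
Proof. by rewrite /crosses subsetUr andbF. Qed.
End Cross.

Section Problem.
Variables (R : realType) (V E : finType) (src dst : E -> V).
Local Notation Ein := (Ein src dst).
Local Notation delta := (delta src dst).

Definition ind (F : {set E}) : E -> R := fun e => if e \in F then 1 else 0.

Lemma zsum_dot (x : E -> R) F : zsum x F = dot (ind F) x.
Proof.
rewrite /zsum /dot big_mkcond /=; apply: eq_bigr => e _.
by rewrite /ind; case: ifP; rewrite ?mul1r ?mul0r.
Qed.

Lemma dot_ind1 (x : E -> R) e : dot (fun k => if k == e then 1 else 0) x = x e.
Proof. by rewrite /dot sum_if1 mul1r. Qed.

Lemma zsumT (x : E -> R) : zsum x setT = \sum_e x e.
Proof. by rewrite /zsum; apply: eq_bigl => e; rewrite in_setT. Qed.

Lemma lagr_eq (c : E -> R) l (S : 'I_l -> {set V}) (b : 'I_l -> int) lam y x :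
  cost (cy src dst c S y) x - lam * \sum_i (b i)%:~R * y i =
  dot c x + \sum_i y i * (zsum x (delta (S i)) - lam * (b i)%:~R).
Proof.
rewrite /cost /cy /dot.
under eq_bigr do rewrite mulrDl.
rewrite big_split /= -addrA; congr (_ + _).
under [X in _ = X]eq_bigr do rewrite mulrBr.
rewrite sumrB mulr_sumr; congr (_ - _); last first.
  by apply: eq_bigr => i _; ring.
rewrite /zsum.
under eq_bigr do rewrite big_mkcond /= mulr_suml.
rewrite exchange_big /=; apply: eq_bigr => i _.
rewrite mulr_sumr [in RHS]big_mkcond /=; apply: eq_bigr => e _.
by case: ifP; rewrite ?mul0r ?mulr0.
Qed.

Lemma approx_dual (c : E -> R) l (S : 'I_l -> {set V}) (b : 'I_l -> int) lam xs eps :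
  optimal_P src dst c S b lam xs -> 0 < eps ->
  exists y : 'I_l -> R, (forall i, 0 <= y i) /\ forall x, in_PST src dst x ->
    cost c xs - eps < cost (cy src dst c S y) x - lam * \sum_i (b i)%:~R * y i.
Proof.
move=> [[xsP xsC] xsO] eps0.
pose J := ((E + {set V}) + (bool + unit))%type.
pose o : J := inr (inr tt).
pose aJ (j : J) : E -> R := match j with
  | inl (inl e) => fun k => - (if k == e then 1 else 0)
  | inl (inr A) => if (A != set0) && (A != setT) then ind (Ein A) else fun _ => 0
  | inr (inl true) => fun _ => 1
  | inr (inl false) => fun _ => -1
  | inr (inr _) => c end.
pose bJ (j : J) : R := match j with
  | inl (inl e) => 0
  | inl (inr A) => if (A != set0) && (A != setT) then (#|A|)%:R - 1 else 0
  | inr (inl true) => (#|V|)%:R - 1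
  | inr (inl false) => - ((#|V|)%:R - 1)
  | inr (inr _) => cost c xs - eps end.
pose aK (i : 'I_l) := ind (delta (S i)).
pose bK (i : 'I_l) := lam * (b i)%:~R.
have dotN (a x : E -> R) : dot (fun k => - a k) x = - dot a x.
  by rewrite /dot -sumrN; apply: eq_bigr => k _; rewrite mulNr.
have dot1 (x : E -> R) : dot (fun _ => 1) x = \sum_e x e.
  by rewrite /dot; apply: eq_bigr => k _; rewrite mul1r.
have dot0 (x : E -> R) : dot (fun _ => 0) x = 0.
  by rewrite /dot big1 // => k _; rewrite mul0r.
have rowsP x : in_PST src dst x <-> (forall j, j != o -> dot (aJ j) x <= bJ j).
  split.
    move=> [x0 [xA xT]] [[e|A]|[[]|[]]] // _ /=.
    - by rewrite dotN dot_ind1 oppr_le0.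
    - case: ifP => [/andP[A0 AT]|_]; last by rewrite dot0.
      by rewrite -zsum_dot; exact: xA.
    - by rewrite dot1 -zsumT xT.
    - by rewrite dotN dot1 -zsumT xT.
  move=> h; split; [|split].
  - move=> e; have := h (inl (inl e)) isT; by rewrite /= dotN dot_ind1 oppr_le0.
  - move=> A A0 AT; have := h (inl (inr A)) isT; by rewrite /= A0 AT /= -zsum_dot.
  - have h1 := h (inr (inl true)) isT; have h2 := h (inr (inl false)) isT.
    move: h1 h2; rewrite /= dotN !dot1 -zsumT lerN2 => h1 h2.
    by apply/eqP; rewrite eq_le h1 h2.
have [|||y [y0 Hy]] := @lagr R E J 'I_l aJ bJ aK bK o xs eps eps0 erefl.
- by apply/rowsP.
- by move=> i; rewrite /aK /bK -zsum_dot; exact: xsC.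
- case=> x [hJ hK].
  have fx : feasible_P src dst S b lam x.
    split; first by apply/rowsP => j _; exact: hJ.
    by move=> i; rewrite zsum_dot; exact: hK.
  have := xsO x fx; have := hJ o; rewrite /= => h1 h2.
  have : cost c xs <= cost c xs - eps by apply: (le_trans h2).
  lra.
exists y; split => // x /rowsP hx; rewrite lagr_eq.
have := Hy x hx; rewrite /= /aK /bK.
by under eq_bigr do rewrite -zsum_dot.
Qed.
Lemma EinT : Ein setT = setT.
Proof. by apply/setP => e; rewrite !inE. Qed.

Lemma ub (x : E -> R) X : in_PST src dst x -> X != set0 -> zsum x (Ein X) <= (#|X|)%:R - 1.
Proof.
move=> [x0 [xA xT]] X0; case: (boolP (X == setT)) => [/eqP ->|XT].
  by rewrite EinT xT cardsT.
exact: xA.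
Qed.

Lemma supermod_pt g A B : ind (Ein A) g + ind (Ein B) g <=
   ind (Ein (A :&: B)) g + ind (Ein (A :|: B)) g.
Proof.
rewrite /ind !inE.
by case: (src g \in A); case: (dst g \in A); case: (src g \in B);
   case: (dst g \in B) => /=; lra.
Qed.

Lemma uncross (x : E -> R) A B : in_PST src dst x -> tight src dst x A -> tight src dst x B ->
  A :&: B != set0 ->
  [/\ tight src dst x (A :&: B), tight src dst x (A :|: B) &
   forall g, 0 < x g -> ind (Ein A) g + ind (Ein B) g =
      ind (Ein (A :&: B)) g + ind (Ein (A :|: B)) g].
Proof.
move=> xP /andP [A0 /eqP tA] /andP [B0 /eqP tB] I0.
have U0 : A :|: B != set0.
  apply: contraNneq A0 => U0; apply/eqP/setP => v; rewrite inE.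
  by apply/negP => vA; have := in_set0 v; rewrite -U0 inE vA.
have x0 := xP.1.
pose F g := (ind (Ein (A :&: B)) g + ind (Ein (A :|: B)) g
             - (ind (Ein A) g + ind (Ein B) g)) * x g.
have F0 g : 0 <= F g by rewrite mulr_ge0 // subr_ge0 supermod_pt.
have sF : \sum_g F g = zsum x (Ein (A :&: B)) + zsum x (Ein (A :|: B))
     - (zsum x (Ein A) + zsum x (Ein B)).
  rewrite !zsum_dot /dot -!big_split /= -sumrB; apply: eq_bigr => g _.
  rewrite /F; ring.
have h1 := ub xP I0; have h2 := ub xP U0.
have c : (#|A :|: B|)%:R + (#|A :&: B|)%:R = (#|A|)%:R + (#|B|)%:R :> R.
  by rewrite -!natrD cardsUI.
have s0 : 0 <= \sum_g F g by apply: sumr_ge0.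
have eI : zsum x (Ein (A :&: B)) = (#|A :&: B|)%:R - 1 by lra.
have eU : zsum x (Ein (A :|: B)) = (#|A :|: B|)%:R - 1 by lra.
split; [by rewrite /tight I0 eI eqxx|by rewrite /tight U0 eU eqxx|].
move=> g xg.
have : F g = 0 by apply: (psumr_eq0P (P := predT)) => //; lra.
move/eqP; rewrite /F mulf_eq0 (gt_eqF xg) orbF subr_eq0 => /eqP ->.
done.
Qed.

Lemma lamP (F : {set {set V}}) (A B : {set V}) : laminar F -> A \in F -> B \in F ->
  [|| A \subset B, B \subset A | [disjoint A & B]].
Proof. by move=> /forallP/(_ A)/implyP h /h/forallP/(_ B)/implyP h2 /h2. Qed.

Lemma EinS (A B : {set V}) : A \subset B -> Ein A \subset Ein B.
Proof.
move=> s; apply/subsetP => g; rewrite !inE => /andP [h1 h2].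
by rewrite !(subsetP s).
Qed.

Lemma child_ex (L : {set {set V}}) (A0 N : {set V}) : N \in L -> N \proper A0 ->
  exists M, child L A0 M && (N \subset M).
Proof.
move=> NL NA.
pose P X := [&& X \in L, N \subset X & X \proper A0].
have PN : P N by rewrite /P NL subxx NA.
case: (@arg_maxnP _ N P (fun X => #|X|) PN) => M /and3P [ML NM MA] Hmax.
exists M; rewrite NM andbT /child ML MA /=.
apply/existsP => -[N' /and3P [N'L MN' N'A]].
have := Hmax N'; rewrite /P N'L N'A (subset_trans NM (proper_sub MN')) => /(_ isT).
by move=> h; have := leq_trans (proper_card MN') h; rewrite ltnn.
Qed.

Lemma EL_in (L : {set {set V}}) (A0 : {set V}) g (N : {set V}) : laminar L -> A0 \in L -> N \in L ->
  g \in EL src dst L A0 -> (g \in Ein N) = (A0 \subset N).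
Proof.
move=> lam A0L NL; rewrite inE => /andP [gA /forallP gC].
case: (boolP (A0 \subset N)) => [s|ns].
  by apply: (subsetP (EinS s)).
have := lamP lam NL A0L; rewrite (negbTE ns) /= => /orP [sNA|d].
  have NA : N \proper A0 by rewrite properE sNA.
  have [M /andP [cM NM]] := child_ex NL NA.
  have := gC M; rewrite cM /= => gM.
  by apply/negP => gN; case/negP: gM; apply: (subsetP (EinS NM)).
move: gA; rewrite !inE => /andP [sA _].
by rewrite (disjointFl d sA).
Qed.

Lemma lam3 (N M : {set V}) : [|| N \subset M, M \subset N | [disjoint N & M]] ->
  [|| M \subset N, N \subset M | [disjoint N & M]].
Proof. by rewrite orbCA. Qed.

Lemma keyK (xs : E -> R) (L : {set {set V}}) (A0 : {set V}) e f :
  in_PST src dst xs -> laminar_decomposition src dst xs L -> A0 \in L ->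
  e \in EL src dst L A0 -> f \in EL src dst L A0 -> 0 < xs e -> 0 < xs f ->
  forall T, tight src dst xs T -> ind (Ein T) e = ind (Ein T) f.
Proof.
move=> xP [/andP [lam /forallP tL] maxL] A0L eL fL xe xf.
have tightL N : N \in L -> tight src dst xs N by move=> NL; have := tL N; rewrite NL.
have step1 N : N \in L -> ind (Ein N) e = ind (Ein N) f.
  by move=> NL; rewrite /ind (EL_in lam A0L NL eL) (EL_in lam A0L NL fL).
pose cnt T := #|[set N in L | crosses T N]|.
suff H : forall n T, (cnt T < n)%N -> tight src dst xs T -> ind (Ein T) e = ind (Ein T) f.
  by move=> T; apply: (H (cnt T).+1).
elim=> [//|n IH] T cT tT.
case: (boolP [exists N in L, crosses T N]) => [/existsP [N /andP [NL cTN]]|nc].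
  have I0 : T :&: N != set0.
    move: cTN => /and3P [_ _]; by rewrite -setI_eq0.
  have [tI tU eqp] := uncross xP tT (tightL N NL) I0.
  have lt S1 : (forall M, M \in L -> crosses S1 M -> crosses T M) -> ~~ crosses S1 N ->
      (cnt S1 < cnt T)%N.
    move=> hs hn; apply: proper_card; rewrite properE; apply/andP; split.
      by apply/subsetP => M; rewrite !inE => /andP [ML cM]; rewrite ML hs.
    apply/subsetP => /(_ N); rewrite !inE NL cTN (negbTE hn) => /(_ isT).
    done.
  have hI := IH _ (leq_trans (lt _ (fun M ML => crossI cTN (lam3 (lamP lam NL ML))) (ncrossI T N)) cT) tI.
  have hU := IH _ (leq_trans (lt _ (fun M ML => crossU cTN (lam3 (lamP lam NL ML))) (ncrossU T N)) cT) tU.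
  have he := eqp e xe; have hf := eqp f xf.
  have hN := step1 N NL.
  lra.
have TL : T \in L.
  have vF : valid_family src dst xs (T |: L).
    apply/andP; split.
      apply/forallP => A; apply/implyP => AF; apply/forallP => B; apply/implyP => BF.
      move: AF BF; rewrite !in_setU1.
      have ncr M : M \in L -> ~~ crosses T M.
        by move=> ML; apply: contra nc => c; apply/existsP; exists M; rewrite ML.
      case/orP => [/eqP ->|AL]; case/orP => [/eqP ->|BL].
      - by rewrite subxx.
      - move: (ncr B BL); rewrite /crosses.
        by case: (T \subset B); case: (B \subset T); case: [disjoint T & B].
      - move: (ncr A AL); rewrite /crosses disjoint_sym.
        by case: (T \subset A); case: (A \subset T); case: [disjoint A & T].
      - exact: (lamP lam AL BL).
    apply/forallP => A; apply/implyP; rewrite in_setU1 => /orP [/eqP ->|AL] //.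
    exact: tightL.
  have := maxL _ vF (subsetUr _ _) => <-; exact: setU11.
exact: step1.
Qed.

Definition d1 (e : E) : E -> R := fun g => if g == e then 1 else 0.

Lemma zsum_pert (x : E -> R) (eta : R) e f F :
  zsum (fun g => x g + eta * (d1 e g - d1 f g)) F =
  zsum x F + eta * (ind F e - ind F f).
Proof.
rewrite !zsum_dot /dot.
under eq_bigr do rewrite mulrDr.
rewrite big_split /=; congr (_ + _).
under eq_bigr do rewrite mulrCA mulrBr.
rewrite -mulr_sumr sumrB /d1; congr (_ * (_ - _)).
- by under eq_bigr do rewrite mulrC; rewrite sum_if1 mul1r.
- by under eq_bigr do rewrite mulrC; rewrite sum_if1 mul1r.
Qed.

Lemma cost_pert (cc x : E -> R) (eta : R) e f :
  cost cc (fun g => x g + eta * (d1 e g - d1 f g)) =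
  cost cc x + eta * (cc e - cc f).
Proof.
rewrite /cost.
under eq_bigr do rewrite mulrDr.
rewrite big_split /=; congr (_ + _).
under eq_bigr do rewrite mulrCA mulrBr.
rewrite -mulr_sumr sumrB /d1; congr (_ * (_ - _)).
- by under eq_bigr do rewrite mulrC; rewrite sum_if1 mul1r.
- by under eq_bigr do rewrite mulrC; rewrite sum_if1 mul1r.
Qed.

Lemma posmin (I : finType) (P : pred I) (s : I -> R) :
  (forall i, P i -> 0 < s i) -> exists eta, 0 < eta /\ forall i, P i -> eta <= s i.
Proof.
move=> h; case: (boolP [exists i, P i]) => [/existsP exP|nP].
  have [i [Pi Hi]] := ex_min s exP; exists (s i); split => //; exact: h.
exists 1; split => // i Pi; case/existsP: nP; by exists i.
Qed.

Lemma perturb (xs : E -> R) e f :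
  in_PST src dst xs -> e != f -> 0 < xs f ->
  (forall T, tight src dst xs T -> ind (Ein T) e = ind (Ein T) f) ->
  exists eta, 0 < eta /\ in_PST src dst (fun g => xs g + eta * (d1 e g - d1 f g)).
Proof.
move=> xP ef xf hK.
have [x0 [xA xT]] := xP.
pose P (A : {set V}) := (A != set0) && ~~ tight src dst xs A.
pose s (A : {set V}) := (#|A|)%:R - 1 - zsum xs (Ein A).
have sp A : P A -> 0 < s A.
  move=> /andP [A0 nt]; rewrite subr_gt0 lt_neqAle ub // andbT.
  by apply: contra nt => /eqP h; rewrite /tight A0 h eqxx.
have [eta0 [eta0p Heta]] := posmin sp.
pose eta := if eta0 <= xs f then eta0 else xs f.
have etap : 0 < eta by rewrite /eta; case: ifP.
have etaf : eta <= xs f by rewrite /eta; case: ifP => // /negbT; rewrite -ltNge => /ltW.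
have etas A : P A -> eta <= s A.
  move=> PA; apply: le_trans (Heta A PA); rewrite /eta; case: ifP => // /negbT.
  by rewrite -ltNge => /ltW.
exists eta; split => //; split; [|split].
- move=> g; rewrite /d1; case: (eqVneq g e) => [->|ge].
    rewrite (negbTE ef) subr0 mulr1; apply: addr_ge0 => //; exact: ltW.
  case: (eqVneq g f) => [->|gf]; first by rewrite sub0r mulrN1 subr_ge0.
  by rewrite subrr mulr0 addr0.
- move=> A A0 AT; rewrite zsum_pert.
  case: (boolP (tight src dst xs A)) => [tA|ntA].
    by rewrite hK // subrr mulr0 addr0; exact: xA.
  have PA : P A by rewrite /P A0.
  have := etas A PA; rewrite /s => h.
  have i1 : ind (Ein A) e - ind (Ein A) f <= 1.
    by rewrite /ind; case: ifP; case: ifP => _ _; lra.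
  have : eta * (ind (Ein A) e - ind (Ein A) f) <= eta.
    by rewrite -[X in _ <= X]mulr1 ler_pM2l.
  lra.
- rewrite zsum_pert /ind !in_setT subrr mulr0 addr0; exact: xT.
Qed.
End Problem.

Theorem lemma5 (R : realType) (V E : finType) (src dst : E -> V)
    (c : E -> R) (l : nat) (S : 'I_l -> {set V}) (b : 'I_l -> int)
    (lam : R) (xs : E -> R) (ys : 'I_l -> R) (L : {set {set V}}) :
  loopless src dst ->
  connected_graph src dst ->
  (forall e, 0 <= c e) ->
  is_chain S ->
  1 <= lam ->
  optimal_P src dst c S b lam xs ->
  optimal_dual src dst c S b lam ys ->
  laminar_decomposition src dst xs L ->
  forall A, A \in L ->
  forall e f, e \in EL src dst L A -> f \in EL src dst L A ->
    0 < xs e -> 0 < xs f ->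
    cy src dst c S ys e = cy src dst c S ys f.
Proof.
move=> ll conn c0 ch lam1 xsO [ys0 ysO] LD A AL.
have xsP := xsO.1.1.
have xsC := xsO.1.2.
pose Lg y x := cost (cy src dst c S y) x - lam * \sum_i (b i)%:~R * y i.
have cy0 g : 0 <= cy src dst c S ys g.
  by rewrite /cy addr_ge0 // sumr_ge0.
have hlb : classical_sets.has_lbound
    (fun r : R => exists x : E -> R, in_PST src dst x /\ r = Lg ys x).
  exists (- (lam * \sum_i (b i)%:~R * ys i)) => r [x [[x0 _] ->]].
  rewrite /Lg lerBrDr addrC subrr /cost; apply: sumr_ge0 => g _.
  exact: mulr_ge0.
have gub x : in_PST src dst x -> g_lam src dst c S b lam ys <= Lg ys x.
  by move=> xP; apply: (ge_inf hlb); exists x.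
have glb eps : 0 < eps -> cost c xs - eps <= g_lam src dst c S b lam ys.
  move=> eps0.
  have [y [y0 Hy]] := approx_dual xsO eps0.
  apply: le_trans (ysO y y0).
  apply: lb_le_inf; first by exists (Lg y xs), xs.
  move=> r [x [xP ->]]; exact: ltW (Hy x xP).
have Lxs : Lg ys xs <= cost c xs.
  rewrite /Lg lagr_eq gerDl; apply: sumr_le0 => i _.
  by apply: mulr_ge0_le0 => //; rewrite subr_le0.
have dir : forall e f, e \in EL src dst L A -> f \in EL src dst L A ->
    0 < xs e -> 0 < xs f -> e != f ->
    cy src dst c S ys f <= cy src dst c S ys e.
  move=> e f eL fL xe xf ef.
  have hK := keyK xsP LD AL eL fL xe xf.
  have [eta [etap xP']] := perturb xsP ef xf hK.
  have := gub _ xP'; rewrite /Lg cost_pert => h1.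
  have H eps : 0 < eps -> - eps <= eta * (cy src dst c S ys e - cy src dst c S ys f).
    move=> eps0; have := glb eps eps0; have := Lxs; rewrite /Lg; lra.
  have : 0 <= eta * (cy src dst c S ys e - cy src dst c S ys f).
    rewrite leNgt; apply/negP => hn.
    have := H (- (eta * (cy src dst c S ys e - cy src dst c S ys f)) / 2).
    lra.
  by rewrite pmulr_rge0 // subr_ge0.
move=> e f eL fL xe xf.
case: (eqVneq e f) => [-> //|ef].
apply/le_anti/andP; split; [exact: (dir f e fL eL xf xe (ltac:(by rewrite eq_sym)))|exact: (dir e f eL fL xe xf ef)].
Qed.
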